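(* Let $R$ be a commutative ring and $S$ a subset of $R$. Consider: (a) $S$ is coprincipal; (b) there are rings $R_1,R_2$ with $R=R_1\times R_2$ such that $S\cap(R_1)^\times\neq\emptyset$ and $s\cdot(1,0)\in(R_1)^\times$ for all $s\in S$. Then (b) implies (a). If moreover $S$ is multiplicatively closed, then (a) implies (b).
   Context: $S$ is coprincipal if $S\ne\emptyset$ and there exists $s\in S$ with $s\in\bigcap_{r\in S}Rr$. $(R_1)^\times$ denotes the units of $R_1$, and $R_1$ is identified with the subset $R_1\times\{0\}$ of $R$, so $(R_1)^\times=\{(u,0):u \text{ a unit of } R_1\}$. *)

(* Defs.v *)
From mathcomp Require Import all_boot all_algebra.
Set Implicit Arguments. Unset Strict Implicit. Unset Printing Implicit Defensive.
Import GRing.Theory.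
Local Open Scope ring_scope.

Definition is_unit (R : comPzRingType) (u : R) : Prop := exists v : R, u * v = 1.

Definition in_principal (R : comPzRingType) (r x : R) : Prop := exists a : R, x = a * r.

Definition coprincipal (R : comPzRingType) (S : R -> Prop) : Prop :=
  (exists s, S s) /\ exists s, S s /\ forall r, S r -> in_principal r s.

Definition mult_closed (R : comPzRingType) (S : R -> Prop) : Prop :=
  S 1 /\ forall x y, S x -> S y -> S (x * y).

(* (b): R = R1 x R2 (via a ring isomorphism f), with R1 identified with R1 x {0}. *)
Definition product_condition (R : comPzRingType) (S : R -> Prop) : Prop :=
  exists (R1 R2 : comPzRingType) (f : {rmorphism R -> (R1 * R2)%type}),
    bijective f /\
    (exists s, S s /\ exists u : R1, is_unit u /\ f s = (u, 0)) /\
    (forall s, S s -> exists u : R1, is_unit u /\ f s * (1, 0) = (u, 0)).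

(* Main.v *)
From HB Require Import structures.
Require Import Defs.
From mathcomp Require Import all_boot all_algebra.
Set Implicit Arguments. Unset Strict Implicit. Unset Printing Implicit Defensive.
Import GRing.Theory.
Local Open Scope ring_scope.

Section Corner.
Variables (R : comPzRingType) (e : R).
Hypothesis he : e * e = e.

Definition corner of e * e = e := {x : R | x * e == x}.
Local Notation cornerT := (corner he).
HB.instance Definition _ := Choice.on cornerT.

Lemma c0 : (0 : R) * e == 0. Proof. by rewrite mul0r. Qed.
Lemma cN (x : cornerT) : - val x * e == - val x.
Proof. by case: x => x /= /eqP hx; rewrite mulNr hx. Qed.
Lemma cD (x y : cornerT) : (val x + val y) * e == val x + val y.
Proof. by case: x y => x /= /eqP hx [y /= /eqP hy]; rewrite mulrDl hx hy. Qed.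
Lemma cM (x y : cornerT) : (val x * val y) * e == val x * val y.
Proof. by case: x y => x /= /eqP hx [y /= /eqP hy]; rewrite -mulrA hy. Qed.
Lemma c1 : e * e == e. Proof. by rewrite he. Qed.

Definition czero : cornerT := exist (fun x : R => x * e == x) 0 c0.
Definition copp (x : cornerT) : cornerT := exist (fun x : R => x * e == x) _ (cN x).
Definition cadd (x y : cornerT) : cornerT := exist (fun x : R => x * e == x) _ (cD x y).
Definition cmul (x y : cornerT) : cornerT := exist (fun x : R => x * e == x) _ (cM x y).
Definition cone : cornerT := exist (fun x : R => x * e == x) _ c1.

Lemma cA : associative cadd.
Proof. by move=> x y z; apply: val_inj; rewrite /= addrA. Qed.
Lemma cC : commutative cadd.
Proof. by move=> x y; apply: val_inj; rewrite /= addrC. Qed.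
Lemma c0l : left_id czero cadd.
Proof. by move=> x; apply: val_inj; rewrite /= add0r. Qed.
Lemma cNl : left_inverse czero copp cadd.
Proof. by move=> x; apply: val_inj; rewrite /= addNr. Qed.
HB.instance Definition _ := GRing.isZmodule.Build cornerT cA cC c0l cNl.

Lemma cmA : associative cmul.
Proof. by move=> x y z; apply: val_inj; rewrite /= mulrA. Qed.
Lemma cmC : commutative cmul.
Proof. by move=> x y; apply: val_inj; rewrite /= mulrC. Qed.
Lemma cm1 : left_id cone cmul.
Proof. by move=> [x hx]; apply: val_inj; rewrite /= mulrC; apply/eqP. Qed.
Lemma cmD : left_distributive cmul (@GRing.add cornerT).
Proof. by move=> x y z; apply: val_inj; rewrite /= mulrDl. Qed.
HB.instance Definition _ := GRing.Zmodule_isComPzRing.Build cornerT cmA cmC cm1 cmD.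

Lemma val_corner_mul (x y : cornerT) : val (x * y) = val x * val y. Proof. by []. Qed.
Lemma val_corner_add (x y : cornerT) : val (x + y) = val x + val y. Proof. by []. Qed.
Lemma val_corner_sub (x y : cornerT) : val (x - y) = val x - val y. Proof. by []. Qed.
Lemma val_corner_one : val (1 : cornerT) = e. Proof. by []. Qed.
Lemma val_corner_zero : val (0 : cornerT) = 0. Proof. by []. Qed.

Lemma cmk_subproof (x : R) : (x * e) * e == x * e.
Proof. by rewrite -mulrA he. Qed.
Definition cmk (x : R) : cornerT := exist (fun x : R => x * e == x) _ (cmk_subproof x).
Lemma cval_mk x : val (cmk x) = x * e. Proof. by []. Qed.
Lemma cval_e (x : cornerT) : val x * e = val x.
Proof. by case: x => x /= /eqP. Qed.
End Corner.

Lemma idemC (R : comPzRingType) (e : R) : e * e = e -> (1 - e) * (1 - e) = 1 - e.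
Proof.
move=> he; rewrite mulrBl mul1r mulrBr mulr1 he subrr subr0 //.
Qed.

Section Split.
Variables (R : comPzRingType) (e : R).
Hypothesis he : e * e = e.
Let he' := idemC he.
Definition fmap (x : R) : (corner he * corner he')%type := (cmk he x, cmk he' x).

Lemma e_orth : e * (1 - e) = 0.
Proof. by rewrite mulrBr mulr1 he subrr. Qed.

Lemma fmap_zmod : zmod_morphism fmap.
Proof.
move=> x y; congr pair; apply: val_inj; rewrite /= mulrBl //.
Qed.
HB.instance Definition _ := GRing.isZmodMorphism.Build R _ fmap fmap_zmod.

Lemma fmap_mul : monoid_morphism fmap.
Proof.
split.
  by congr pair; apply: val_inj; rewrite /= mul1r.
move=> x y; congr pair; apply: val_inj; rewrite /=.
  by rewrite mulrACA he.
by rewrite mulrACA he'.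
Qed.
HB.instance Definition _ := GRing.isMonoidMorphism.Build R _ fmap fmap_mul.

Definition finv (p : (corner he * corner he')%type) : R := val p.1 + val p.2.

Lemma fmap_bij : bijective fmap.
Proof.
exists finv.
  by move=> x; rewrite /finv /= -mulrDr addrC subrK mulr1.
move=> [x y]; rewrite /finv /=; congr pair; apply: val_inj; rewrite /=.
  rewrite mulrDl cval_e -(cval_e y) -mulrA [(1 - e) * e]mulrC e_orth mulr0 addr0 //.
rewrite mulrDl cval_e -(cval_e x) -mulrA e_orth mulr0 add0r //.
Qed.
End Split.

Theorem lemma3p14 (R : comPzRingType) (S : R -> Prop) :
  (product_condition S -> coprincipal S) /\
  (mult_closed S -> coprincipal S -> product_condition S).
Proof.
split.
  move=> [R1 [R2 [f [[g fK gK] [[s0 [Ss0 [u0 [[u0' hu0] hf0]]]] H]]]]].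
  split; first by exists s0.
  exists s0; split => // r Sr.
  have [v [[v' hv] hfr]] := H r Sr.
  exists (g (u0 * v', 0)).
  apply: (can_inj fK); rewrite rmorphM gK hf0.
  move: hfr; case: (f r) => r1 r2 /= [].
  rewrite mulr1 => -> _.
  congr pair => /=.
    by rewrite -mulrA [v' * v]mulrC hv mulr1.
  by rewrite mul0r.
move=> [S1 Smul] [_ [s0 [Ss0 Hs0]]].
have [a ha] := Hs0 _ (Smul _ _ Ss0 Ss0).
pose e := a * s0.
have he : e * e = e.
  by rewrite /e mulrACA -mulrA -ha.
have s0e : s0 * e = s0 by rewrite /e mulrCA -ha.
exists (corner he), (corner (idemC he)), (fmap he).
split; first exact: fmap_bij.
split.
  exists s0; split => //; exists (cmk he s0); split.
    exists (cmk he a); apply: val_inj; rewrite /= s0e mulrCA s0e //.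
  congr pair; apply: val_inj => /=.
  by rewrite mulrBr mulr1 s0e subrr.
move=> r Sr.
have [b hb] := Hs0 r Sr.
exists (cmk he r); split.
  exists (cmk he (b * a)); apply: val_inj => /=.
  have -> : r * e * (b * a * e) = (b * r) * a * (e * e).
    by rewrite mulrACA; congr (_ * _); rewrite mulrA [r * b]mulrC.
  by rewrite -hb he [s0 * a]mulrC -/e he.
congr pair; apply: val_inj => /=.
  by rewrite -mulrA he.
by rewrite mulr0.
Qed.
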